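(* For every real number $\alpha$, the space $Z_\alpha$ is Cartesian, i.e. $Z_\alpha$ is isomorphic (via a bijective bounded linear map with bounded inverse) to its Cartesian square $Z_\alpha \oplus Z_\alpha$.
   Context: Fix $\alpha\in\mathbb{R}$ and let $f_\alpha(t):=t^{1+i\alpha}$ for $0\le t<\infty$. For a sequence $x=(\xi_k)\in \ell_2$ (complex-valued) define the sequence $\Omega_\alpha(x)$ by $(\Omega_\alpha(x))_k:=\xi_k f_\alpha\left(\log \frac{\|x\|_2}{|\xi_k|}\right)$ if $\xi_k\neq 0$ and $(\Omega_\alpha(x))_k:=0$ otherwise. Let $Z_\alpha$ be the space of all pairs $(x,y)$ of complex-valued sequences with $x\in\ell_2$ such that $\|(x,y)\|_\alpha:=\|x\|_2+\|y-\Omega_\alpha(x)\|_2<\infty$. (It is known, by Kalton, that $\|\cdot\|_\alpha$ is a quasi-norm on $Z_\alpha$ equivalent to a norm under which $Z_\alpha$ is a complex Banach space.) A Banach space $X$ is called Cartesian if it is isomorphic to $X\oplus X$. *)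

(* Defs.v *)
From Stdlib Require Import Reals.
From Coquelicot Require Import Coquelicot.
Open Scope R_scope.

Definition cseq := nat -> C.

Definition cseq_add (x y : cseq) : cseq := fun k => Cplus (x k) (y k).
Definition cseq_sub (x y : cseq) : cseq := fun k => Cminus (x k) (y k).
Definition cseq_scal (a : C) (x : cseq) : cseq := fun k => Cmult a (x k).

Definition in_l2 (x : cseq) : Prop := ex_series (fun k => (Cmod (x k)) ^ 2).

(* ell_2 norm (meaningful when in_l2 x). *)
Definition l2norm (x : cseq) : R := sqrt (Series (fun k => (Cmod (x k)) ^ 2)).

(* f_alpha(t) = t^(1 + i alpha) = t * exp(i alpha ln t) for t > 0, and f_alpha(0) = 0. *)
Definition f_alpha (alpha t : R) : C :=
  if Rlt_dec 0 t then (t * cos (alpha * ln t), t * sin (alpha * ln t)) else RtoC 0.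

Definition Omega (alpha : R) (x : cseq) : cseq := fun k =>
  if Req_EM_T (Cmod (x k)) 0 then RtoC 0
  else Cmult (x k) (f_alpha alpha (ln (l2norm x / Cmod (x k)))).

Definition Zpair := (cseq * cseq)%type.

Definition inZ (alpha : R) (z : Zpair) : Prop :=
  in_l2 (fst z) /\ in_l2 (cseq_sub (snd z) (Omega alpha (fst z))).

Definition Znorm (alpha : R) (z : Zpair) : R :=
  l2norm (fst z) + l2norm (cseq_sub (snd z) (Omega alpha (fst z))).

Definition Zadd (z w : Zpair) : Zpair := (cseq_add (fst z) (fst w), cseq_add (snd z) (snd w)).
Definition Zscal (a : C) (z : Zpair) : Zpair := (cseq_scal a (fst z), cseq_scal a (snd z)).

Definition inZ2 (alpha : R) (p : Zpair * Zpair) : Prop := inZ alpha (fst p) /\ inZ alpha (snd p).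
Definition Z2norm (alpha : R) (p : Zpair * Zpair) : R := Znorm alpha (fst p) + Znorm alpha (snd p).
Definition Z2add (p q : Zpair * Zpair) : Zpair * Zpair := (Zadd (fst p) (fst q), Zadd (snd p) (snd q)).
Definition Z2scal (a : C) (p : Zpair * Zpair) : Zpair * Zpair := (Zscal a (fst p), Zscal a (snd p)).

(* Boundedness is
   w.r.t. the quasi-norms, which are equivalent to the Banach norms (Kalton). *)
Definition Cartesian_Z (alpha : R) : Prop :=
  exists (T : Zpair -> Zpair * Zpair) (S : Zpair * Zpair -> Zpair) (M : R),
    (forall z, inZ alpha z -> inZ2 alpha (T z)) /\
    (forall p, inZ2 alpha p -> inZ alpha (S p)) /\
    (forall a z w, inZ alpha z -> inZ alpha w ->
        T (Zadd (Zscal a z) w) = Z2add (Z2scal a (T z)) (T w)) /\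
    (forall a p q, inZ2 alpha p -> inZ2 alpha q ->
        S (Z2add (Z2scal a p) q) = Zadd (Zscal a (S p)) (S q)) /\
    (forall z, inZ alpha z -> S (T z) = z) /\
    (forall p, inZ2 alpha p -> T (S p) = p) /\
    (forall z, inZ alpha z -> Z2norm alpha (T z) <= M * Znorm alpha z) /\
    (forall p, inZ2 alpha p -> Znorm alpha (S p) <= M * Z2norm alpha p).

(* Main.v *)
Require Import Defs.
From Stdlib Require Import Reals Lra Lia Psatz FunctionalExtensionality.
From Coquelicot Require Import Coquelicot.
Open Scope R_scope.

Definition Il {T} (u v : nat -> T) (n : nat) : T :=
  if Nat.even n then u (Nat.div2 n) else v (Nat.div2 n).

Lemma Il_even {T} (u v : nat -> T) j : Il u v (2*j) = u j.
Proof. unfold Il. rewrite Nat.even_even, Nat.div2_double. reflexivity. Qed.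

Lemma Il_odd {T} (u v : nat -> T) j : Il u v (2*j+1) = v j.
Proof. unfold Il. rewrite Nat.even_odd, Nat.div2_odd'. reflexivity. Qed.

Lemma Il_eta {T} (w : nat -> T) n : Il (fun k => w (2*k)%nat) (fun k => w (2*k+1)%nat) n = w n.
Proof.
  destruct (Nat.Even_or_Odd n) as [[j ->]|[j ->]].
  - rewrite Il_even; reflexivity.
  - rewrite Il_odd; reflexivity.
Qed.

Definition z0 : nat -> R := fun _ => 0.

Lemma psum_Il0 (a : nat -> R) m :
  sum_n (Il a z0) (2*m) = sum_n a m /\ sum_n (Il a z0) (2*m+1) = sum_n a m.
Proof.
  induction m as [|m [IH1 IH2]].
  - simpl. rewrite sum_Sn, !sum_O. unfold Il, z0; simpl. split; [reflexivity|].
    change (Rplus (a 0%nat) 0 = a 0%nat). ring.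
  - assert (E1 : (2 * S m = S (2*m+1))%nat) by lia.
    assert (E2 : (2 * S m + 1 = S (2 * S m))%nat) by lia.
    assert (H1 : sum_n (Il a z0) (2 * S m) = sum_n a (S m)).
    { rewrite E1, sum_Sn, IH2, <- E1, Il_even, sum_Sn. reflexivity. }
    split; [exact H1|].
    rewrite E2, sum_Sn, <- E2, Il_odd, H1. unfold z0. change (Rplus (sum_n a (S m)) 0 = sum_n a (S m)). ring.
Qed.

Lemma psum_Il0' (a : nat -> R) n : sum_n (Il a z0) n = sum_n a (Nat.div2 n).
Proof.
  destruct (Nat.Even_or_Odd n) as [[j ->]|[j ->]].
  - rewrite Nat.div2_double. apply psum_Il0.
  - rewrite Nat.div2_odd'. apply psum_Il0.
Qed.

Lemma filterlim_div2 : filterlim Nat.div2 eventually eventually.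
Proof.
  intros P [N HN]. exists (2*N)%nat. intros n Hn. apply HN.
  apply Nat.div2_le_lower_bound. lia.
Qed.

Lemma filterlim_dbl : filterlim (fun m => 2*m)%nat eventually eventually.
Proof.
  intros P [N HN]. exists N. intros n Hn. apply HN. lia.
Qed.

Lemma Il0_ex (a : nat -> R) : ex_series a -> ex_series (Il a z0) /\ Series (Il a z0) = Series a.
Proof.
  intros Ha. assert (H : is_series (Il a z0) (Series a)).
  { pose proof (Series_correct a Ha) as Hs.
    assert (Hl : is_lim_seq (sum_n a) (Series a)) by exact Hs.
    pose proof (is_lim_seq_subseq _ _ _ filterlim_div2 Hl) as H2.
    assert (H3 : is_lim_seq (sum_n (Il a z0)) (Series a)).
    { eapply is_lim_seq_ext; [|exact H2]. intros n. simpl. symmetry. apply psum_Il0'. }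
    exact H3. }
  split. exists (Series a); exact H. apply is_series_unique; exact H.
Qed.

Lemma Il0_inv (a : nat -> R) : ex_series (Il a z0) -> ex_series a.
Proof.
  intros [l Hl]. exists l.
  assert (Hl' : is_lim_seq (sum_n (Il a z0)) l) by exact Hl.
  pose proof (is_lim_seq_subseq _ _ _ filterlim_dbl Hl') as H2.
  assert (H3 : is_lim_seq (sum_n a) l).
  { eapply is_lim_seq_ext; [|exact H2]. intros n. simpl. apply psum_Il0. }
  exact H3.
Qed.

Lemma Il0r_shift (b : nat -> R) n : Il z0 b (S n) = Il b z0 n.
Proof.
  destruct (Nat.Even_or_Odd n) as [[j ->]|[j ->]].
  - replace (S (2*j)) with (2*j+1)%nat by lia. rewrite Il_odd, Il_even. reflexivity.
  - replace (S (2*j+1)) with (2*(S j))%nat by lia. rewrite Il_odd, Il_even. reflexivity.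
Qed.

Lemma Il0r_ex (b : nat -> R) : ex_series b -> ex_series (Il z0 b) /\ Series (Il z0 b) = Series b.
Proof.
  intros Hb. destruct (Il0_ex b Hb) as [H1 H2].
  assert (H3 : ex_series (Il z0 b)).
  { apply ex_series_incr_1. eapply ex_series_ext; [|exact H1]. intros n. symmetry. apply Il0r_shift. }
  split; [exact H3|].
  rewrite Series_incr_1 by exact H3.
  rewrite (Series_ext _ (Il b z0)) by (intros; apply Il0r_shift).
  rewrite H2. unfold Il, z0 at 1. simpl. ring.
Qed.

Lemma Il0r_inv (b : nat -> R) : ex_series (Il z0 b) -> ex_series b.
Proof.
  intros H. apply Il0_inv. apply ex_series_incr_1 in H.
  eapply ex_series_ext; [|exact H]. intros n. apply Il0r_shift.
Qed.

Lemma Ser_Il (a b : nat -> R) : ex_series a -> ex_series b ->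
  ex_series (Il a b) /\ Series (Il a b) = Series a + Series b.
Proof.
  intros Ha Hb. destruct (Il0_ex a Ha) as [H1 H2]. destruct (Il0r_ex b Hb) as [H3 H4].
  assert (E : forall n, Il a z0 n + Il z0 b n = Il a b n).
  { intros n. unfold Il, z0. destruct (Nat.even n); ring. }
  split.
  - eapply ex_series_ext; [|exact (ex_series_plus _ _ H1 H3)]. intros n. apply E.
  - rewrite <- (Series_ext _ _ E). rewrite Series_plus by assumption. rewrite H2, H4. reflexivity.
Qed.

Lemma Ser_split (w : nat -> R) : (forall n, 0 <= w n) -> ex_series w ->
  ex_series (fun k => w (2*k)%nat) /\ ex_series (fun k => w (2*k+1)%nat) /\
  Series w = Series (fun k => w (2*k)%nat) + Series (fun k => w (2*k+1)%nat).
Proof.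
  intros Hp Hw.
  assert (HE : ex_series (fun k => w (2*k)%nat)).
  { apply Il0_inv. eapply (@ex_series_le R_AbsRing R_CompleteNormedModule); [|exact Hw]. intros n.
    change (norm (Il (fun k : nat => w (2 * k)%nat) z0 n)) with (Rabs (Il (fun k : nat => w (2 * k)%nat) z0 n)).
    destruct (Nat.Even_or_Odd n) as [[j ->]|[j ->]].
    - rewrite Il_even. rewrite Rabs_pos_eq by apply Hp. lra.
    - rewrite Il_odd. unfold z0. rewrite Rabs_R0. apply Hp. }
  assert (HO : ex_series (fun k => w (2*k+1)%nat)).
  { apply Il0r_inv. eapply (@ex_series_le R_AbsRing R_CompleteNormedModule); [|exact Hw]. intros n.
    change (norm (Il z0 (fun k : nat => w (2 * k + 1)%nat) n)) with (Rabs (Il z0 (fun k : nat => w (2 * k+1)%nat) n)).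
    destruct (Nat.Even_or_Odd n) as [[j ->]|[j ->]].
    - rewrite Il_even. unfold z0. rewrite Rabs_R0. apply Hp.
    - rewrite Il_odd. rewrite Rabs_pos_eq by apply Hp. lra. }
  split; [exact HE|]. split; [exact HO|].
  rewrite <- (proj2 (Ser_Il _ _ HE HO)). apply Series_ext. intros n. symmetry. apply Il_eta.
Qed.

Lemma term_le (a : nat -> R) n : (forall k, 0 <= a k) -> ex_series a -> a n <= Series a.
Proof.
  intros Hp Ha. rewrite (Series_incr_n a (S n)) by (lia || exact Ha).
  assert (H0 : 0 <= Series (fun k => a (S n + k)%nat)).
  { assert (Hz : Series (fun _ : nat => 0) = 0).
    { rewrite (Series_ext (fun _ => 0) (fun n : nat => 0 * 0)) by (intros; ring).
      rewrite Series_scal_l. ring. }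
    rewrite <- Hz. apply Series_le. intros; split; [lra| apply Hp].
    apply (ex_series_incr_n a (S n)). exact Ha. }
  assert (H1 : a n <= sum_f_R0 a (Init.Nat.pred (S n))).
  { simpl. destruct n. simpl. lra. simpl. pose proof (cond_pos_sum a n Hp). lra. }
  lra.
Qed.


Lemma sqrt_le_sq B m : 0 <= m -> B <= m ^ 2 -> sqrt B <= m.
Proof. intros Hm HB. rewrite <- (sqrt_pow2 m Hm). apply sqrt_le_1_alt. exact HB. Qed.

Lemma Cmod_le_sum (p : C) : Cmod p <= Rabs (fst p) + Rabs (snd p).
Proof.
  destruct p as [a b]. unfold Cmod. cbn [fst snd]. apply sqrt_le_sq.
  - pose proof (Rabs_pos a); pose proof (Rabs_pos b); lra.
  - rewrite <- (pow2_abs a), <- (pow2_abs b). pose proof (Rabs_pos a); pose proof (Rabs_pos b). nra.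
Qed.

Lemma Cmod_sq_add (a b : C) : Cmod (a + b) ^ 2 <= 2 * Cmod a ^ 2 + 2 * Cmod b ^ 2.
Proof.
  pose proof (Cmod_triangle a b). pose proof (Cmod_ge_0 (a+b)).
  pose proof (Cmod_ge_0 a). pose proof (Cmod_ge_0 b).
  apply Rle_trans with ((Cmod a + Cmod b)^2). apply pow_incr; lra.
  pose proof (Rle_0_sqr (Cmod a - Cmod b)). unfold Rsqr in *. nra.
Qed.

Lemma Cmod_sq_sub (a b : C) : Cmod (a - b) ^ 2 <= 2 * Cmod a ^ 2 + 2 * Cmod b ^ 2.
Proof.
  unfold Cminus. rewrite <- (Cmod_opp b). apply Cmod_sq_add.
Qed.

Section Lip.
Variable alpha : R.
Definition gR (t : R) := t * cos (alpha * ln t).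
Definition hR (t : R) := t * sin (alpha * ln t).

Lemma gR_der c : 0 < c -> derivable_pt_lim gR c (cos (alpha * ln c) - alpha * sin (alpha * ln c)).
Proof.
  intros Hc. apply is_derive_Reals. unfold gR. auto_derive.
  - exact Hc.
  - field. lra.
Qed.

Lemma hR_der c : 0 < c -> derivable_pt_lim hR c (sin (alpha * ln c) + alpha * cos (alpha * ln c)).
Proof.
  intros Hc. apply is_derive_Reals. unfold hR. auto_derive.
  - exact Hc.
  - field. lra.
Qed.

Lemma bnd1 x y : Rabs (cos x - alpha * sin y) <= 1 + Rabs alpha.
Proof.
  unfold Rminus. eapply Rle_trans. apply Rabs_triang. rewrite Rabs_Ropp, Rabs_mult.
  pose proof (COS_bound x). pose proof (SIN_bound y).
  assert (Rabs (cos x) <= 1) by (apply Rabs_le; lra).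
  assert (Rabs (sin y) <= 1) by (apply Rabs_le; lra).
  pose proof (Rabs_pos alpha). pose proof (Rabs_pos (sin y)). nra.
Qed.

Lemma bnd2 x y : Rabs (sin x + alpha * cos y) <= 1 + Rabs alpha.
Proof.
  eapply Rle_trans. apply Rabs_triang. rewrite Rabs_mult.
  pose proof (SIN_bound x). pose proof (COS_bound y).
  assert (Rabs (sin x) <= 1) by (apply Rabs_le; lra).
  assert (Rabs (cos y) <= 1) by (apply Rabs_le; lra).
  pose proof (Rabs_pos alpha). pose proof (Rabs_pos (cos y)). nra.
Qed.

Lemma lip_gen (F F' : R -> R) s t :
  0 < s <= t -> (forall c, 0 < c -> derivable_pt_lim F c (F' c)) ->
  (forall c, Rabs (F' c) <= 1 + Rabs alpha) ->
  Rabs (F t - F s) <= (1 + Rabs alpha) * (t - s).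
Proof.
  intros [Hs Hst] HD HB. destruct (Rle_lt_or_eq_dec s t Hst) as [Hlt|Heq].
  - destruct (MVT_cor2 F F' s t Hlt) as [c [Hc1 Hc2]].
    { intros c Hc. apply HD. lra. }
    rewrite Hc1, Rabs_mult, (Rabs_pos_eq (t - s)) by lra.
    apply Rmult_le_compat_r; [lra| apply HB].
  - subst. unfold Rminus. rewrite !Rplus_opp_r, Rabs_R0. lra.
Qed.

Definition Kc := 2 * (1 + Rabs alpha).

Lemma Kc_pos : 0 <= Kc.
Proof. unfold Kc. pose proof (Rabs_pos alpha). lra. Qed.

Lemma flip s t : 0 <= s <= t ->
  Cmod (Cminus (f_alpha alpha t) (f_alpha alpha s)) <= Kc * (t - s).
Proof.
  intros [Hs Hst]. unfold f_alpha, Kc. pose proof (Rabs_pos alpha).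
  destruct (Rlt_dec 0 s) as [Hs'|Hs'].
  - destruct (Rlt_dec 0 t) as [Ht'|Ht']; [|lra].
    eapply Rle_trans. apply Cmod_le_sum. simpl.
    pose proof (lip_gen gR _ s t (conj Hs' Hst) gR_der (fun c => bnd1 _ _)) as H1.
    pose proof (lip_gen hR _ s t (conj Hs' Hst) hR_der (fun c => bnd2 _ _)) as H2.
    unfold gR, hR in *. unfold Rminus in H1, H2. lra.
  - assert (s = 0) by lra. subst s.
    destruct (Rlt_dec 0 t) as [Ht'|Ht'].
    + eapply Rle_trans. apply Cmod_le_sum. simpl.
      rewrite !Ropp_0, !Rplus_0_r, !Rabs_mult, (Rabs_pos_eq t) by lra.
      assert (Rabs (cos (alpha * ln t)) <= 1) by (apply Rabs_le; apply COS_bound).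
      assert (Rabs (sin (alpha * ln t)) <= 1) by (apply Rabs_le; apply SIN_bound).
      nra.
    + assert (t = 0) by lra. subst t.
      replace (Cminus (RtoC 0) (RtoC 0)) with (RtoC 0) by ring. rewrite Cmod_0. lra.
Qed.

Definition om (p : R) (c : C) : C :=
  if Req_EM_T (Cmod c) 0 then RtoC 0 else Cmult c (f_alpha alpha (ln (p / Cmod c))).

Lemma Omega_om x k : Omega alpha x k = om (l2norm x) (x k).
Proof. reflexivity. Qed.

Lemma om_diff p q c : 0 <= p <= q -> Cmod c <= p ->
  Cmod (Cminus (om q c) (om p c)) <= Kc * (q / p) * Cmod c.
Proof.
  intros [Hp Hpq] Hc. unfold om. pose proof Kc_pos.
  destruct (Req_EM_T (Cmod c) 0) as [E|E].
  - replace (Cminus (RtoC 0) (RtoC 0)) with (RtoC 0) by ring. rewrite Cmod_0, E. lra.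
  - pose proof (Cmod_ge_0 c). assert (Hc0 : 0 < Cmod c) by lra.
    replace (Cminus (c * f_alpha alpha (ln (q / Cmod c))) (c * f_alpha alpha (ln (p / Cmod c))))
      with (c * (Cminus (f_alpha alpha (ln (q / Cmod c))) (f_alpha alpha (ln (p / Cmod c)))))%C by ring.
    rewrite Cmod_mult.
    assert (Hs : 0 <= ln (p / Cmod c)).
    { rewrite <- ln_1. apply ln_le; [lra|]. apply (Rmult_le_reg_r (Cmod c)); [lra|].
      unfold Rdiv. rewrite Rmult_assoc, Rinv_l by lra. lra. }
    assert (Hst : ln (p / Cmod c) <= ln (q / Cmod c)).
    { apply ln_le. apply Rdiv_lt_0_compat; lra. apply Rmult_le_compat_r. 
      left; apply Rinv_0_lt_compat; lra. lra. }
    pose proof (flip _ _ (conj Hs Hst)) as HF.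
    assert (Hd : ln (q / Cmod c) - ln (p / Cmod c) <= q / p).
    { rewrite !ln_div by lra.
      assert (Hqp : ln (q / p) = ln q - ln p) by (rewrite ln_div; lra).
      pose proof (exp_ineq1_le (ln (q / p))) as Hx. rewrite exp_ln in Hx.
      lra. apply Rdiv_lt_0_compat; lra. }
    pose proof (Cmod_ge_0 (Cminus (f_alpha alpha (ln (q / Cmod c))) (f_alpha alpha (ln (p / Cmod c))))).
    assert (Kc * (ln (q / Cmod c) - ln (p / Cmod c)) <= Kc * (q / p)) by (apply Rmult_le_compat_l; lra).
    nra.
Qed.
End Lip.


Definition N2 (x : cseq) := Series (fun k => Cmod (x k) ^ 2).

Lemma sq_nn (c : C) : 0 <= Cmod c ^ 2.
Proof. apply pow2_ge_0. Qed.

Lemma N2_nonneg x : in_l2 x -> 0 <= N2 x.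
Proof.
  intros H. pose proof (term_le (fun k => Cmod (x k) ^ 2) 0 (fun k => sq_nn _) H).
  pose proof (sq_nn (x 0%nat)). unfold N2. lra.
Qed.

Lemma l2_sq x : in_l2 x -> l2norm x ^ 2 = N2 x.
Proof. intros H. apply pow2_sqrt. apply N2_nonneg; exact H. Qed.

Lemma l2_pos x : 0 <= l2norm x.
Proof. apply sqrt_pos. Qed.

Lemma l2_term x k : in_l2 x -> Cmod (x k) <= l2norm x.
Proof.
  intros H. rewrite <- (sqrt_pow2 (Cmod (x k))) by apply Cmod_ge_0.
  apply sqrt_le_1_alt. apply (term_le (fun k => Cmod (x k) ^ 2) k (fun k => sq_nn _) H).
Qed.

Lemma l2_mono x y : in_l2 x -> in_l2 y -> N2 x <= N2 y -> l2norm x <= l2norm y.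
Proof. intros _ _ H. apply sqrt_le_1_alt. exact H. Qed.

Lemma cmp (c : cseq) (g : nat -> R) : (forall k, Cmod (c k) ^ 2 <= g k) -> ex_series g ->
  in_l2 c /\ N2 c <= Series g.
Proof.
  intros Hc Hg. split.
  - eapply (@ex_series_le R_AbsRing R_CompleteNormedModule); [|exact Hg]. intros n.
    change (norm (Cmod (c n) ^ 2)) with (Rabs (Cmod (c n) ^ 2)).
    rewrite Rabs_pos_eq by apply sq_nn. apply Hc.
  - apply Series_le; [|exact Hg]. intros n. split; [apply sq_nn| apply Hc].
Qed.

Lemma l2_split x : in_l2 x ->
  in_l2 (fun k => x (2*k)%nat) /\ in_l2 (fun k => x (2*k+1)%nat) /\
  N2 x = N2 (fun k => x (2*k)%nat) + N2 (fun k => x (2*k+1)%nat).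
Proof.
  intros H. exact (Ser_split (fun k => Cmod (x k) ^ 2) (fun k => sq_nn _) H).
Qed.

Lemma l2_Il u v : in_l2 u -> in_l2 v -> in_l2 (Il u v) /\ N2 (Il u v) = N2 u + N2 v.
Proof.
  intros Hu Hv. destruct (Ser_Il _ _ Hu Hv) as [H1 H2].
  assert (E : forall n, Il (fun k => Cmod (u k) ^ 2) (fun k => Cmod (v k) ^ 2) n = Cmod (Il u v n) ^ 2).
  { intros n. unfold Il. destruct (Nat.even n); reflexivity. }
  split.
  - eapply ex_series_ext; [exact E| exact H1].
  - unfold N2. rewrite <- (Series_ext _ _ E). exact H2.
Qed.

Lemma sc K p q : 0 <= p -> (K * (q / p)) ^ 2 * p ^ 2 <= (K * q) ^ 2.
Proof.
  intros Hp. destruct (Req_dec p 0) as [->|Hp0].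
  - simpl. rewrite !Rmult_0_l, Rmult_0_r. pose proof (pow2_ge_0 (K*q)). lra.
  - right. field. exact Hp0.
Qed.

Section Main.
Variable alpha : R.
Notation K := (Kc alpha).
Notation om := (om alpha).

Lemma ptw p q c y : 0 <= p <= q -> Cmod c <= p ->
  Cmod (Cminus y (om q c)) ^ 2 <= 2 * Cmod (Cminus y (om p c)) ^ 2 + 2 * ((K * (q / p)) ^ 2 * Cmod c ^ 2).
Proof.
  intros Hpq Hc. pose proof (om_diff alpha p q c Hpq Hc) as H.
  replace (Cminus y (om q c)) with (Cminus (Cminus y (om p c)) (Cminus (om q c) (om p c))) by ring.
  eapply Rle_trans. apply Cmod_sq_sub. apply Rplus_le_compat_l. apply Rmult_le_compat_l; [lra|].
  rewrite <- Rpow_mult_distr. apply pow_incr. split; [apply Cmod_ge_0| exact H].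
Qed.

Lemma ptw' p q c y : 0 <= p <= q -> Cmod c <= p ->
  Cmod (Cminus y (om p c)) ^ 2 <= 2 * Cmod (Cminus y (om q c)) ^ 2 + 2 * ((K * (q / p)) ^ 2 * Cmod c ^ 2).
Proof.
  intros Hpq Hc. pose proof (om_diff alpha p q c Hpq Hc) as H.
  replace (Cminus y (om p c)) with (Cplus (Cminus y (om q c)) (Cminus (om q c) (om p c))) by ring.
  eapply Rle_trans. apply Cmod_sq_add. apply Rplus_le_compat_l. apply Rmult_le_compat_l; [lra|].
  rewrite <- Rpow_mult_distr. apply pow_incr. split; [apply Cmod_ge_0| exact H].
Qed.


Lemma ex_lin (a b : nat -> R) c1 c2 : ex_series a -> ex_series b ->
  ex_series (fun k => c1 * a k + c2 * b k) /\ Series (fun k => c1 * a k + c2 * b k) = c1 * Series a + c2 * Series b.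
Proof.
  intros Ha Hb.
  assert (H1 : ex_series (fun k => c1 * a k)) by exact (ex_series_scal_l c1 a Ha).
  assert (H2 : ex_series (fun k => c2 * b k)) by exact (ex_series_scal_l c2 b Hb).
  split.
  - exact (ex_series_plus _ _ H1 H2).
  - rewrite Series_plus by assumption. rewrite !Series_scal_l. reflexivity.
Qed.

Lemma Tcomp (x y : cseq) (e : nat -> nat) :
  in_l2 x -> in_l2 (cseq_sub y (Omega alpha x)) ->
  in_l2 (fun k => x (e k)) -> N2 (fun k => x (e k)) <= N2 x ->
  in_l2 (fun k => cseq_sub y (Omega alpha x) (e k)) ->
  N2 (fun k => cseq_sub y (Omega alpha x) (e k)) <= N2 (cseq_sub y (Omega alpha x)) ->
  in_l2 (cseq_sub (fun k => y (e k)) (Omega alpha (fun k => x (e k)))) /\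
  l2norm (cseq_sub (fun k => y (e k)) (Omega alpha (fun k => x (e k))))
    <= 2 * (l2norm (cseq_sub y (Omega alpha x)) + K * l2norm x).
Proof.
  intros Hx HD Hu Hux HDe HDe'.
  remember (cseq_sub y (Omega alpha x)) as D eqn:ED.
  remember (fun k => x (e k)) as u eqn:Eu.
  set (pu := l2norm u). set (px := l2norm x).
  assert (Hpu : 0 <= pu <= px) by (split; [apply l2_pos| apply l2_mono; auto]).
  destruct (ex_lin (fun k => Cmod (D (e k)) ^ 2) (fun k => Cmod (u k) ^ 2) 2 (2 * (K * (px / pu)) ^ 2) HDe Hu)
    as [Hg Hgs].
  destruct (cmp (cseq_sub (fun k => y (e k)) (Omega alpha u))
     (fun k => 2 * Cmod (D (e k)) ^ 2 + 2 * (K * (px / pu)) ^ 2 * Cmod (u k) ^ 2)) as [H1 H2];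
   [ | exact Hg | ].
  { intros k. unfold cseq_sub. rewrite Omega_om. fold pu.
    eapply Rle_trans. apply (ptw' pu px (u k) (y (e k)) Hpu). apply l2_term; exact Hu.
    right. rewrite ED. unfold cseq_sub. rewrite Omega_om. fold px. rewrite Eu. ring. }
  split; [exact H1|].
  rewrite Hgs in H2. fold (N2 (fun k => D (e k))) in H2. fold (N2 u) in H2.
  rewrite <- (l2_sq u Hu) in H2. fold pu in H2.
  pose proof (sc K pu px (proj1 Hpu)) as Hsc.
  rewrite <- (l2_sq D HD) in HDe'.
  pose proof (l2_pos D). pose proof (Kc_pos alpha). pose proof (N2_nonneg _ HDe).
  apply sqrt_le_sq. nra.
  assert (HK : 0 <= K * px) by nra.
  fold (N2 (cseq_sub (fun k0 : nat => y (e k0)) (Omega alpha u))).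
  assert (0 <= l2norm D * (K * px)) by nra.
  nra.
Qed.


Lemma Scomp (u y1 v y2 : cseq) :
  in_l2 u -> in_l2 (cseq_sub y1 (Omega alpha u)) ->
  in_l2 v -> in_l2 (cseq_sub y2 (Omega alpha v)) ->
  in_l2 (Il u v) /\ l2norm (Il u v) <= l2norm u + l2norm v /\
  in_l2 (cseq_sub (Il y1 y2) (Omega alpha (Il u v))) /\
  l2norm (cseq_sub (Il y1 y2) (Omega alpha (Il u v))) <=
    2 * (l2norm (cseq_sub y1 (Omega alpha u)) + l2norm (cseq_sub y2 (Omega alpha v)) + K * l2norm (Il u v)).
Proof.
  intros Hu HD1 Hv HD2.
  remember (cseq_sub y1 (Omega alpha u)) as D1 eqn:ED1.
  remember (cseq_sub y2 (Omega alpha v)) as D2 eqn:ED2.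
  destruct (l2_Il u v Hu Hv) as [Hx HN].
  set (x := Il u v) in *.
  set (pu := l2norm u). set (pv := l2norm v). set (px := l2norm x).
  pose proof (l2_sq u Hu) as Su. pose proof (l2_sq v Hv) as Sv. pose proof (l2_sq x Hx) as Sx.
  fold pu in Su. fold pv in Sv. fold px in Sx.
  pose proof (l2_pos u) as Pu. pose proof (l2_pos v) as Pv. pose proof (l2_pos x) as Px.
  fold pu in Pu. fold pv in Pv. fold px in Px.
  assert (Hpu : 0 <= pu <= px) by (split; [lra| nra]).
  assert (Hpv : 0 <= pv <= px) by (split; [lra| nra]).
  assert (Hxuv : px <= pu + pv) by nra.
  destruct (ex_lin (fun k => Cmod (D1 k) ^ 2) (fun k => Cmod (u k) ^ 2) 2 (2 * (K * (px / pu)) ^ 2) HD1 Hu)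
    as [Hg1 Hgs1].
  destruct (ex_lin (fun k => Cmod (D2 k) ^ 2) (fun k => Cmod (v k) ^ 2) 2 (2 * (K * (px / pv)) ^ 2) HD2 Hv)
    as [Hg2 Hgs2].
  destruct (Ser_Il _ _ Hg1 Hg2) as [Hg Hgs].
  destruct (cmp (cseq_sub (Il y1 y2) (Omega alpha x)) (Il
       (fun k : nat =>
        2 * Cmod (D1 k) ^ 2 + 2 * (K * (px / pu)) ^ 2 * Cmod (u k) ^ 2)
       (fun k : nat =>
        2 * Cmod (D2 k) ^ 2 + 2 * (K * (px / pv)) ^ 2 * Cmod (v k) ^ 2))) as [H1 H2]; [ | exact Hg | ].
  { intros n. destruct (Nat.Even_or_Odd n) as [[j ->]|[j ->]].
    - unfold cseq_sub. rewrite Omega_om. fold px. unfold x. rewrite !Il_even.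
      eapply Rle_trans. apply (ptw pu px (u j) (y1 j) Hpu). apply l2_term; exact Hu.
      right. rewrite ED1. unfold cseq_sub. rewrite Omega_om. fold pu. ring.
    - unfold cseq_sub. rewrite Omega_om. fold px. unfold x. rewrite !Il_odd.
      eapply Rle_trans. apply (ptw pv px (v j) (y2 j) Hpv). apply l2_term; exact Hv.
      right. rewrite ED2. unfold cseq_sub. rewrite Omega_om. fold pv. ring. }
  split; [exact Hx|]. split; [exact Hxuv|]. split; [exact H1|].
  rewrite Hgs, Hgs1, Hgs2 in H2.
  fold (N2 D1) (N2 u) (N2 D2) (N2 v) in H2.
  rewrite <- (l2_sq D1 HD1), <- (l2_sq D2 HD2), <- Su, <- Sv in H2.
  pose proof (sc K pu px (proj1 Hpu)) as Hsc1.
  pose proof (sc K pv px (proj1 Hpv)) as Hsc2.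
  pose proof (l2_pos D1). pose proof (l2_pos D2). pose proof (Kc_pos alpha).
  assert (HK : 0 <= K * px) by nra.
  apply sqrt_le_sq. nra.
  fold (N2 (cseq_sub (Il y1 y2) (Omega alpha x))).
  assert (0 <= l2norm D1 * (K * px)) by nra.
  assert (0 <= l2norm D2 * (K * px)) by nra.
  assert (0 <= l2norm D1 * l2norm D2) by nra.
  nra.
Qed.

End Main.


Definition Tm (z : Zpair) : Zpair * Zpair :=
  ((fun k => fst z (2*k)%nat, fun k => snd z (2*k)%nat),
   (fun k => fst z (2*k+1)%nat, fun k => snd z (2*k+1)%nat)).
Definition Sm (p : Zpair * Zpair) : Zpair :=
  (Il (fst (fst p)) (fst (snd p)), Il (snd (fst p)) (snd (snd p))).

Lemma Tfull alpha z : inZ alpha z ->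
  inZ2 alpha (Tm z) /\ Z2norm alpha (Tm z) <= (4 + 4 * Kc alpha) * Znorm alpha z.
Proof.
  destruct z as [x y]. intros [Hx HD]. simpl in Hx, HD.
  destruct (l2_split x Hx) as [HxE [HxO Nx]].
  destruct (l2_split _ HD) as [HDE [HDO ND]].
  pose proof (N2_nonneg _ HxE). pose proof (N2_nonneg _ HxO).
  pose proof (N2_nonneg _ HDE). pose proof (N2_nonneg _ HDO).
  destruct (Tcomp alpha x y (fun k => 2*k)%nat Hx HD HxE ltac:(lra) HDE ltac:(lra)) as [A1 B1].
  destruct (Tcomp alpha x y (fun k => 2*k+1)%nat Hx HD HxO ltac:(lra) HDO ltac:(lra)) as [A2 B2].
  assert (M1 : l2norm (fun k => x (2*k)%nat) <= l2norm x) by (apply l2_mono; auto; lra).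
  assert (M2 : l2norm (fun k => x (2*k+1)%nat) <= l2norm x) by (apply l2_mono; auto; lra).
  split.
  - split; split; assumption.
  - unfold Z2norm, Znorm, Tm. cbn [fst snd].
    pose proof (l2_pos x). pose proof (l2_pos (cseq_sub y (Omega alpha x))).
    pose proof (Kc_pos alpha). nra.
Qed.

Lemma Sfull alpha p : inZ2 alpha p ->
  inZ alpha (Sm p) /\ Znorm alpha (Sm p) <= (4 + 4 * Kc alpha) * Z2norm alpha p.
Proof.
  destruct p as [[u y1] [v y2]]. intros [[Hu HD1] [Hv HD2]]. cbn [fst snd] in *.
  destruct (Scomp alpha u y1 v y2 Hu HD1 Hv HD2) as [A1 [B1 [A2 B2]]].
  split.
  - split; assumption.
  - unfold Z2norm, Znorm, Sm. cbn [fst snd].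
    pose proof (l2_pos u). pose proof (l2_pos v).
    pose proof (l2_pos (cseq_sub y1 (Omega alpha u))).
    pose proof (l2_pos (cseq_sub y2 (Omega alpha v))).
    pose proof (Kc_pos alpha). nra.
Qed.

Theorem mainTheorem1 : forall alpha : R, Cartesian_Z alpha.
Proof.
  intros alpha. exists Tm, Sm, (4 + 4 * Kc alpha).
  split; [intros z Hz; apply (Tfull alpha z Hz)|].
  split; [intros p Hp; apply (Sfull alpha p Hp)|].
  split; [intros; reflexivity|].
  split.
  { intros a [[u1 y1] [v1 w1]] [[u2 y2] [v2 w2]] _ _. unfold Sm, Z2add, Z2scal, Zadd, Zscal. simpl.
    f_equal; apply functional_extensionality; intro n; unfold Il, cseq_add, cseq_scal;
      destruct (Nat.even n); reflexivity. }
  split.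
  { intros [x y] _. unfold Sm, Tm. simpl. f_equal; apply functional_extensionality; intro n; apply Il_eta. }
  split.
  { intros [[u y1] [v y2]] _. unfold Sm, Tm. simpl.
    f_equal; f_equal; apply functional_extensionality; intro k;
      first [apply Il_even | apply Il_odd]. }
  split; [intros z Hz; apply (Tfull alpha z Hz)|].
  intros p Hp; apply (Sfull alpha p Hp).
Qed.
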